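(* Let $\mathcal{M},\mathcal{L}\in\mathbb{C}^{2n\times 2n}$ with $(\mathcal{M},\mathcal{L})$ regular, let $(R_1,T_1)$ and $(R_2,T_2)$ be regular pairs with $R_i,T_i\in\mathbb{C}^{r_i\times r_i}$, and let $U_1\in\mathbb{C}^{2n\times r_1}$, $U_2\in\mathbb{C}^{2n\times r_2}$ have full column rank and satisfy $\mathcal{M}U_1T_1=\mathcal{L}U_1R_1$ and $\mathcal{M}U_2T_2=\mathcal{L}U_2R_2$. (i) If $(\mathcal{M},\mathcal{L})$ is a Hamiltonian pair and $\sigma(R_1,T_1)\cap\sigma(-R_2^H,T_2^H)=\emptyset$, then $U_1$ and $U_2$ are $\mathcal{J}$-orthogonal, i.e. $U_2^H\mathcal{J}U_1=0$. (ii) If $(\mathcal{M},\mathcal{L})$ is a symplectic pair and $\sigma(R_1,T_1)\cap\sigma(T_2^H,R_2^H)=\emptyset$, then $U_2^H\mathcal{J}U_1=0$.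
   Context: $\mathcal{J}=\mathcal{J}_n=\begin{bmatrix}0&I_n\\-I_n&0\end{bmatrix}$. A pair $(\mathcal{M},\mathcal{L})$ of $2n\times2n$ matrices is a Hamiltonian pair if $\mathcal{M}\mathcal{J}\mathcal{L}^H=-\mathcal{L}\mathcal{J}\mathcal{M}^H$, and a symplectic pair if $\mathcal{M}\mathcal{J}\mathcal{M}^H=\mathcal{L}\mathcal{J}\mathcal{L}^H$. A pair $(A,B)$ of square matrices is regular if $\det(A-\lambda B)\neq0$ for some $\lambda\in\mathbb{C}$; its spectrum $\sigma(A,B)$ is the set of $\lambda\in\mathbb{C}$ with $\det(A-\lambda B)=0$, together with $\infty$ if $B$ is singular. *)

(* Defs.v *)
From HB Require Import structures.
From mathcomp Require Import all_boot all_order all_algebra.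
Set Implicit Arguments. Unset Strict Implicit. Unset Printing Implicit Defensive.
Import Order.TTheory GRing.Theory Num.Theory.
Local Open Scope ring_scope.

(* Complex matrices: we work over an arbitrary numClosedFieldType C
   (e.g. the complex numbers), with conjugation Num.conj. *)

Definition ctrmx (C : numClosedFieldType) m n (A : 'M[C]_(m, n)) : 'M[C]_(n, m) :=
  (map_mx (@Num.conj C) A)^T.

Definition Jmx (C : numClosedFieldType) (n : nat) : 'M[C]_(n + n) :=
  block_mx 0 1%:M (- 1%:M) 0.

Definition hamiltonian_pair (C : numClosedFieldType) n (M L : 'M[C]_(n + n)) :=
  M *m Jmx C n *m ctrmx L = - (L *m Jmx C n *m ctrmx M).

Definition symplectic_pair (C : numClosedFieldType) n (M L : 'M[C]_(n + n)) :=
  M *m Jmx C n *m ctrmx M = L *m Jmx C n *m ctrmx L.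

Definition regular_pair (C : numClosedFieldType) m (A B : 'M[C]_m) :=
  exists l : C, \det (A - l *: B) != 0.

(* spectrum of (A,B) as a subset of C ∪ {∞}: Some l = finite l, None = ∞ *)
Definition in_spectrum (C : numClosedFieldType) m (A B : 'M[C]_m) (z : option C) : Prop :=
  match z with
  | Some l => \det (A - l *: B) = 0
  | None => \det B = 0
  end.

(* Main.v *)
From HB Require Import structures.
From mathcomp Require Import all_boot all_order all_algebra.
From mathcomp Require Import ring.
Require Import Defs.
Set Implicit Arguments. Unset Strict Implicit. Unset Printing Implicit Defensive.
Import Order.TTheory GRing.Theory Num.Theory.
Local Open Scope ring_scope.

Section Aux.
Variable C : numClosedFieldType.

Lemma ctrmxK m n (A : 'M[C]_(m, n)) : ctrmx (ctrmx A) = A.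
Proof. by apply/matrixP => i j; rewrite /ctrmx !mxE conjCK. Qed.

Lemma ctrmxM m n p (A : 'M[C]_(m, n)) (B : 'M[C]_(n, p)) :
  ctrmx (A *m B) = ctrmx B *m ctrmx A.
Proof. by rewrite /ctrmx map_mxM trmx_mul. Qed.

Lemma ctrmxN m n (A : 'M[C]_(m, n)) : ctrmx (- A) = - ctrmx A.
Proof. by apply/matrixP => i j; rewrite /ctrmx !mxE rmorphN. Qed.

Lemma ctrmxB m n (A B : 'M[C]_(m, n)) : ctrmx (A - B) = ctrmx A - ctrmx B.
Proof. by apply/matrixP => i j; rewrite /ctrmx !mxE rmorphB. Qed.

Lemma ctrmxZ m n a (A : 'M[C]_(m, n)) : ctrmx (a *: A) = a^* *: ctrmx A.
Proof. by apply/matrixP => i j; rewrite /ctrmx !mxE rmorphM. Qed.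

Lemma det_ctrmx m (A : 'M[C]_m) : \det (ctrmx A) = (\det A)^*.
Proof. by rewrite /ctrmx det_tr det_map_mx. Qed.

Lemma ctrmx0 m n : ctrmx (0 : 'M[C]_(m, n)) = 0.
Proof. by apply/matrixP => i j; rewrite /ctrmx !mxE rmorph0. Qed.

Lemma ctrmx_eq0 m n (A : 'M[C]_(m, n)) : ctrmx A = 0 -> A = 0.
Proof. by move=> h; rewrite -(ctrmxK A) h ctrmx0. Qed.

Lemma JJ n : ctrmx (Jmx C n) *m Jmx C n = 1%:M.
Proof.
rewrite /Jmx /ctrmx map_block_mx tr_block_mx mulmx_block.
rewrite !map_mx0 !trmx0 !mul0mx !mulmx0 !add0r !addr0.
have h1 : map_mx (@Num.conj C) (1%:M : 'M_n) = 1%:M by apply: map_mx1.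
have h2 : map_mx (@Num.conj C) (- (1%:M : 'M_n)) = - 1%:M.
  by apply/matrixP => i j; rewrite !mxE rmorphN rmorphMn rmorph1.
rewrite h1 h2 !trmx1 !mulmx1.
have -> : (- (1%:M : 'M[C]_n))^T = - 1%:M.
  by apply/matrixP => i j; rewrite !mxE eq_sym.
by rewrite mulNmx mulmxN mul1mx opprK (scalar_mx_block n n 1).
Qed.

Lemma rank_rowfree m n (A : 'M[C]_(m, n)) :
  (forall x : 'rV_m, x *m A = 0 -> x = 0) -> \rank A = m.
Proof.
move=> h; apply/eqP; rewrite -/(row_free A) -kermx_eq0; apply/eqP.
apply/row_matrixP => i; rewrite row0; apply: h.
by rewrite -row_mul mulmx_ker row0.
Qed.

Lemma rank_colfree m n (A : 'M[C]_(m, n)) :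
  (forall x : 'cV_n, A *m x = 0 -> x = 0) -> \rank A = n.
Proof.
move=> h; rewrite -mxrank_tr; apply: rank_rowfree => x hx.
rewrite -(trmxK x); rewrite (h x^T) ?trmx0 //.
by rewrite -(trmxK (A *m _)) trmx_mul trmxK hx trmx0.
Qed.

Lemma kernel_param N K r (G : 'M[C]_(N, K)) (H : 'M[C]_(K, N)) (V : 'M[C]_(K, r)) :
  (N + N = K)%N -> \rank G = N -> \rank H = N -> G *m H = 0 -> G *m V = 0 ->
  exists X : 'M[C]_(N, r), V = H *m X.
Proof.
move=> eK rG rH GH GV.
have sH : (H^T <= kermx G^T)%MS by apply/sub_kermxP; rewrite -trmx_mul GH trmx0.
have sV : (V^T <= kermx G^T)%MS by apply/sub_kermxP; rewrite -trmx_mul GV trmx0.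
have rk : \rank (kermx G^T) = N by rewrite mxrank_ker mxrank_tr rG -eK addnK.
have sK : (kermx G^T <= H^T)%MS.
  by rewrite -(mxrank_leqif_sup sH).2 rk mxrank_tr rH.
have /submxP [D eD] := submx_trans sV sK.
exists D^T; by rewrite -(trmxK V) eD trmx_mul trmxK.
Qed.

End Aux.
Section Poly.
Variable C : numClosedFieldType.

Lemma exists_notin (s : seq C) : exists x, x \notin s.
Proof.
pose t := [seq (i%:R : C) | i <- iota 0 (size s).+1].
have Ut : uniq t.
  rewrite map_inj_uniq ?iota_uniq // => i j /eqP; rewrite eqr_nat => /eqP.
  done.
have : ~~ all (mem s) t.
  apply/negP => /allP H; have := uniq_leq_size Ut H.
  by rewrite size_map size_iota ltnn.
by case/allPn => x _ xs; exists x.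
Qed.

Lemma regular_finite m (A B : 'M[C]_m) : regular_pair A B ->
  exists s : seq C, forall l, l \notin s -> \det (A - l *: B) != 0.
Proof.
case=> l0 hl0.
pose p := \det (map_mx polyC A - 'X *: map_mx polyC B).
have pE : forall l, p.[l] = \det (A - l *: B).
  move=> l; rewrite -horner_evalE -det_map_mx; congr (\det _).
  by apply/matrixP => i j; rewrite !mxE /= !horner_evalE !hornerE.
have p0 : p != 0 by apply: contraNneq hl0 => h; rewrite -pE h horner0.
have [r Hr] := closed_field_poly_normal p.
exists r => l lr; rewrite -pE Hr hornerZ horner_prod mulf_neq0 ?lead_coef_eq0 //.
rewrite prodf_seq_neq0; apply/allP => z zr /=.
by rewrite hornerXsubC subr_eq0; apply: contraNneq lr => ->.
Qed.

End Poly.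
Section Sylv.
Variable C : numClosedFieldType.

Lemma sylv_core r1 r2 (A B : 'M[C]_r1.+1) (P Q : 'M[C]_r2.+1) (Y : 'M[C]_(r2.+1, r1.+1)) l :
  \det (A - l *: B) != 0 -> \det (P - l *: Q) != 0 ->
  (forall z, ~ (in_spectrum A B z /\ in_spectrum P Q z)) ->
  Q *m Y *m A = P *m Y *m B -> Y = 0.
Proof.
move=> dB dQ disj e.
set B' := A - l *: B; set Q' := P - l *: Q.
have uB : B' \in unitmx by rewrite unitmxE unitfE.
have uQ : Q' \in unitmx by rewrite unitmxE unitfE.
have e1 : Q' *m Y *m B = Q *m Y *m B'.
  rewrite /Q' /B' mulmxBl mulmxBr mulmxBl -e.
  rewrite -!scalemxAl -?scalemxAr -!mulmxA.
  done.
set S := B *m invmx B'; set Z := invmx Q' *m Q.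
have eYS : Y *m S = Z *m Y.
  have : invmx Q' *m (Q' *m Y *m B) *m invmx B' = invmx Q' *m (Q *m Y *m B') *m invmx B' by rewrite e1.
  rewrite !mulmxA mulVmx // mul1mx -!mulmxA mulmxV // mulmx1 => ->.
  by rewrite !mulmxA.
have hp : forall p, Y *m horner_mx S p = horner_mx Z p *m Y.
  elim/poly_ind => [|p c IH]; first by rewrite !rmorph0 mulmx0 mul0mx.
  rewrite !rmorphD !rmorphM /= !horner_mx_X !horner_mx_C -!mulmxE.
  rewrite mulmxDr mulmxDl mulmxA IH -[horner_mx Z p *m Y *m S]mulmxA eYS mulmxA.
  by rewrite mul_mx_scalar mul_scalar_mx.
have [s Hs] := closed_field_poly_normal (char_poly S).
rewrite (monicP (char_poly_monic S)) scale1r in Hs.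
have h0 : horner_mx Z (char_poly S) *m Y = 0 by rewrite -hp Cayley_Hamilton mulmx0.
suff uZ : horner_mx Z (char_poly S) \in unitmx.
  by rewrite -[Y]mul1mx -(mulVmx uZ) -mulmxA h0 mulmx0.
rewrite Hs rmorph_prod big_seq.
apply: (big_ind (fun X => X \in unitmx)); first exact: unitmx1.
  by move=> X1 X2 u1 u2; rewrite -mulmxE unitmx_mul u1 u2.
move=> mu mus; rewrite rmorphB /= horner_mx_X horner_mx_C.
have rt : root (char_poly S) mu.
  by rewrite Hs /root horner_prod prodf_seq_eq0; apply/hasP; exists mu => //=; rewrite hornerXsubC subrr.
rewrite -eigenvalue_root_char in rt.
case/eigenvalueP: rt => v vS vnz.
have d1 : \det (mu *: B' - B) = 0.
  apply/eqP/det0P; exists v => //.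
  have : v *m S *m B' = mu *: v *m B' by rewrite vS.
  rewrite -mulmxA mulmxKV // => h.
  by rewrite mulmxBr h -scalemxAl -scalemxAr subrr.
rewrite unitmxE unitfE; apply/negP => /eqP d2.
have d3 : \det (Q - mu *: Q') = 0.
  have -> : Q - mu *: Q' = Q' *m (Z - mu%:M).
    by rewrite mulmxBr mulmxA mulmxV // mul1mx mul_mx_scalar.
  by rewrite det_mulmx d2 mulr0.
have [mu0|munz] := eqVneq mu 0.
  apply: (disj None); split => /=.
    move: d1; rewrite mu0 scale0r sub0r -scaleN1r detZ => /eqP.
    by rewrite mulf_eq0 expf_eq0 oppr_eq0 oner_eq0 andbF => /eqP.
  by move: d3; rewrite mu0 scale0r subr0.
apply: (disj (Some (l + mu^-1))); split => /=.
  have : mu *: B' - B = mu *: (A - (l + mu^-1) *: B).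
    apply/matrixP => i j; rewrite !mxE; field; exact: munz.
  move=> h; move: d1; rewrite h detZ => /eqP.
  by rewrite mulf_eq0 expf_eq0 (negbTE munz) andbF => /eqP.
have : Q - mu *: Q' = (- mu) *: (P - (l + mu^-1) *: Q).
  apply/matrixP => i j; rewrite !mxE; field; exact: munz.
move=> h; move: d3; rewrite h detZ => /eqP.
by rewrite mulf_eq0 expf_eq0 oppr_eq0 (negbTE munz) andbF => /eqP.
Qed.

Lemma sylv r1 r2 (A B : 'M[C]_r1) (P Q : 'M[C]_r2) (Y : 'M[C]_(r2, r1)) :
  regular_pair A B -> regular_pair P Q ->
  (forall z, ~ (in_spectrum A B z /\ in_spectrum P Q z)) ->
  Q *m Y *m A = P *m Y *m B -> Y = 0.
Proof.
move=> rAB rPQ disj e.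
case: r1 A B Y rAB disj e => [|r1] A B Y rAB disj e; first by rewrite thinmx0.
case: r2 P Q Y rPQ disj e => [|r2] P Q Y rPQ disj e; first by rewrite flatmx0.
have [s1 h1] := regular_finite rAB.
have [s2 h2] := regular_finite rPQ.
have [l hl] := exists_notin (s1 ++ s2).
rewrite mem_cat negb_or in hl; case/andP: hl => l1 l2.
exact: (sylv_core (h1 l l1) (h2 l l2) disj e).
Qed.
End Sylv.

Theorem theorem2p2 (C : numClosedFieldType) (n r1 r2 : nat)
  (M L : 'M[C]_(n + n)) (R1 T1 : 'M[C]_r1) (R2 T2 : 'M[C]_r2)
  (U1 : 'M[C]_(n + n, r1)) (U2 : 'M[C]_(n + n, r2)) :
  regular_pair M L ->
  regular_pair R1 T1 -> regular_pair R2 T2 ->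
  \rank U1 = r1 -> \rank U2 = r2 ->
  M *m U1 *m T1 = L *m U1 *m R1 ->
  M *m U2 *m T2 = L *m U2 *m R2 ->
  (hamiltonian_pair M L ->
   (forall z, ~ (in_spectrum R1 T1 z /\ in_spectrum (- ctrmx R2) (ctrmx T2) z)) ->
   ctrmx U2 *m Jmx C n *m U1 = 0)
  /\
  (symplectic_pair M L ->
   (forall z, ~ (in_spectrum R1 T1 z /\ in_spectrum (ctrmx T2) (ctrmx R2) z)) ->
   ctrmx U2 *m Jmx C n *m U1 = 0).
Proof.
move=> rML rR1 rR2 _ _ e1 e2.
set J := Jmx C n.
have JJ' : ctrmx J *m J = 1%:M := JJ C n.
have joint : forall x : 'rV_(n + n), x *m M = 0 -> x *m L = 0 -> x = 0.
  case: rML => l hl x xM xL.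
  have u : M - l *: L \in unitmx by rewrite unitmxE unitfE.
  have h : x *m (M - l *: L) = 0 by rewrite mulmxBr xM -scalemxAr xL scaler0 subr0.
  by rewrite -[x]mulmx1 -(mulmxV u) mulmxA h mul0mx.
have rG : \rank (row_mx M L) = (n + n)%N.
  apply: rank_rowfree => x; rewrite mul_mx_row -row_mx0 => /eq_row_mx [xM xL].
  exact: joint.
have Jinj : forall m (X : 'M_(n + n, m)), J *m X = 0 -> X = 0.
  by move=> m X h; rewrite -[X]mul1mx -JJ' -mulmxA h mulmx0.
have ctr0 : forall (A : 'M[C]_(n + n)) (x : 'cV_(n + n)), J *m ctrmx A *m x = 0 ->
    ctrmx x *m A = 0.
  move=> A x; rewrite -mulmxA => /Jinj h.
  by have := congr1 (@ctrmx C _ _) h; rewrite ctrmxM ctrmxK ctrmx0.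
have GV : row_mx M L *m col_mx (U2 *m T2) (- (U2 *m R2)) = 0.
  by rewrite mul_row_col mulmxN !mulmxA e2 subrr.
split => [ham disj | sym disj].
- pose H := col_mx (J *m ctrmx L) (J *m ctrmx M).
  have rH : \rank H = (n + n)%N.
    apply: rank_colfree => x; rewrite mul_col_mx -col_mx0 => /eq_col_mx [h1 h2].
    by apply: ctrmx_eq0; apply: joint; [apply: ctr0 h2 | apply: ctr0 h1].
  have GH : row_mx M L *m H = 0.
    by rewrite mul_row_col !mulmxA ham addNr.
  have [X eX] := kernel_param (erefl _) rG rH GH GV.
  rewrite mul_col_mx in eX; case/eq_col_mx: eX => eT eR.
  apply: (sylv (P := - ctrmx R2) (Q := ctrmx T2) rR1 _ disj).
    case: rR2 => l0 h0; exists (- l0^*).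
    have -> : - ctrmx R2 - (- l0^*) *: ctrmx T2 = (-1) *: ctrmx (R2 - l0 *: T2).
      by apply/matrixP => i j; rewrite /ctrmx !mxE rmorphB rmorphM; ring.
    by rewrite detZ det_ctrmx mulf_neq0 ?signr_eq0 ?conjC_eq0.
  have lhs : ctrmx T2 *m (ctrmx U2 *m J *m U1) *m R1 = ctrmx X *m (L *m U1 *m R1).
    rewrite !mulmxA -ctrmxM eT !ctrmxM ctrmxK !mulmxA -(mulmxA _ (ctrmx J)) JJ' mulmx1.
    by [].

  have rhs : - ctrmx R2 *m (ctrmx U2 *m J *m U1) *m T1 = ctrmx X *m (M *m U1 *m T1).
    rewrite !mulmxA mulNmx -ctrmxM -ctrmxN eR !ctrmxM ctrmxK !mulmxA -(mulmxA _ (ctrmx J)) JJ' mulmx1.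
    by [].
  by rewrite lhs rhs e1.
- pose H := col_mx (J *m ctrmx M) (- (J *m ctrmx L)).
  have rH : \rank H = (n + n)%N.
    apply: rank_colfree => x; rewrite mul_col_mx -col_mx0 => /eq_col_mx [h1 h2].
    move: h2; rewrite mulNmx => /eqP; rewrite oppr_eq0 => /eqP h2.
    by apply: ctrmx_eq0; apply: joint; [apply: ctr0 h1 | apply: ctr0 h2].
  have GH : row_mx M L *m H = 0.
    by rewrite mul_row_col mulmxN !mulmxA sym subrr.
  have [X eX] := kernel_param (erefl _) rG rH GH GV.
  rewrite mul_col_mx in eX; case/eq_col_mx: eX => eT.
  rewrite mulNmx => /oppr_inj eR.
  apply: (sylv (P := ctrmx T2) (Q := ctrmx R2) rR1 _ disj).
    have [s hs] := regular_finite rR2.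
    have [l0 hl0] := exists_notin (0 :: s).
    rewrite inE negb_or in hl0; case/andP: hl0 => l0nz l0s.
    exists (l0^-1)^*.
    have -> : ctrmx T2 - (l0^-1)^* *: ctrmx R2 = ctrmx ((- l0^-1) *: (R2 - l0 *: T2)).
      apply/matrixP => i j; rewrite /ctrmx !mxE rmorphM rmorphN rmorphB rmorphM.
      rewrite !fmorphV; field; by rewrite conjC_eq0.
    by rewrite det_ctrmx detZ conjC_eq0 mulf_neq0 ?hs // expf_neq0 // oppr_eq0 invr_eq0.
  have lhs : ctrmx R2 *m (ctrmx U2 *m J *m U1) *m R1 = ctrmx X *m (L *m U1 *m R1).
    rewrite !mulmxA -ctrmxM eR !ctrmxM ctrmxK !mulmxA -(mulmxA _ (ctrmx J)) JJ' mulmx1.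
    by [].
  have rhs : ctrmx T2 *m (ctrmx U2 *m J *m U1) *m T1 = ctrmx X *m (M *m U1 *m T1).
    rewrite !mulmxA -ctrmxM eT !ctrmxM ctrmxK !mulmxA -(mulmxA _ (ctrmx J)) JJ' mulmx1.
    by [].
  by rewrite lhs rhs e1.
Qed.
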